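(* For every (possibly partial) function $f:\mathcal{S}\to\mathcal{Z}$, $\mathcal{S}\subseteq\mathcal{X}\times\mathcal{Y}$, every $\varepsilon\ge0$ and every $z_0\in\mathcal{Z}$, $$\mathrm{srec}^{z_0}_\varepsilon(f)\le\overline{\mathrm{prt}}_\varepsilon(f)\le\mathrm{prt}_\varepsilon(f).$$
   Context: $\mathcal{X},\mathcal{Y},\mathcal{Z}$ finite; rectangles are $A\times B$ with $A\subseteq\mathcal{X},B\subseteq\mathcal{Y}$ (including empty); sums over $R$ range over all rectangles. Relaxed partition bound: for a distribution $\mu$ on $\mathcal{X}\times\mathcal{Y}$, $\overline{\mathrm{prt}}^\mu_\varepsilon(f)$ is the value of: minimize $1/\eta$ over $\eta>0$, $p_{R,z}\ge0$ s.t. (i) $\sum_{(x,y)\in\mathcal{S}}\mu(x,y)\sum_{R\ni(x,y)}p_{R,f(x,y)}+\sum_{(x,y)\notin\mathcal{S}}\mu(x,y)\sum_{z,R\ni(x,y)}p_{R,z}\ge(1-\varepsilon)\eta$; (ii) $\forall (x,y)\in\mathcal{X}\times\mathcal{Y}$: $\sum_{z,R\ni(x,y)}p_{R,z}\le\eta$; (iii) $\sum_{R,z}p_{R,z}=1$. $\overline{\mathrm{prt}}_\varepsilon(f)=\max_\mu\overline{\mathrm{prt}}^\mu_\varepsilon(f)$. Partition bound (Jain–Klauck): $\mathrm{prt}_\varepsilon(f)=\min\sum_{R,z}w_{R,z}$ over $w_{R,z}\ge0$ s.t. $\forall(x,y)\in\mathcal{S}$: $\sum_{R\ni(x,y)}w_{R,f(x,y)}\ge1-\varepsilon$,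 and $\forall(x,y)\in\mathcal{X}\times\mathcal{Y}$: $\sum_{z,R\ni(x,y)}w_{R,z}=1$. Smooth rectangle bound: $\mathrm{srec}^{z_0}_\varepsilon(f)=\min\sum_R w'_R$ over $w'_R\ge0$ s.t. $\forall(x,y)\in f^{-1}(z_0)$: $1-\varepsilon\le\sum_{R\ni(x,y)}w'_R\le1$, and $\forall(x,y)\in\mathcal{S}\setminus f^{-1}(z_0)$: $\sum_{R\ni(x,y)}w'_R\le\varepsilon$. *)

(* Defs.v *)
From HB Require Import structures.
From mathcomp Require Import all_boot all_order all_algebra.
Set Implicit Arguments. Unset Strict Implicit. Unset Printing Implicit Defensive.
Import Order.TTheory GRing.Theory Num.Theory.
Local Open Scope ring_scope.

Section Bounds.
Variables (R : realFieldType) (X Y Z : finType).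

Definition rect := ({set X} * {set Y})%type.
Definition in_rect (r : rect) (x : X) (y : Y) : bool := (x \in r.1) && (y \in r.2).

Definition is_min (P : R -> Prop) (v : R) : Prop := P v /\ forall w, P w -> v <= w.
Definition is_max (P : R -> Prop) (v : R) : Prop := P v /\ forall w, P w -> w <= v.

(* the (possibly partial) function f : S -> Z is given by S and a total f,
   only the values on S matter *)
Variables (S : {set X * Y}) (f : X -> Y -> Z).

Definition is_distribution (mu : X -> Y -> R) : Prop :=
  (forall x y, 0 <= mu x y) /\ \sum_(x : X) \sum_(y : Y) mu x y = 1.

Definition rprt_feasible (eps : R) (mu : X -> Y -> R) (eta : R) (p : rect -> Z -> R) : Prop :=
  [/\ 0 < eta,
      forall r z, 0 <= p r z,
      \sum_(xy in S) mu xy.1 xy.2 * (\sum_(r : rect | in_rect r xy.1 xy.2) p r (f xy.1 xy.2))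
        + \sum_(xy in ~: S) mu xy.1 xy.2 *
            (\sum_(z : Z) \sum_(r : rect | in_rect r xy.1 xy.2) p r z)
        >= (1 - eps) * eta,
      forall x y, \sum_(z : Z) \sum_(r : rect | in_rect r x y) p r z <= eta
    & \sum_(r : rect) \sum_(z : Z) p r z = 1].

Definition rprt_mu_objectives (eps : R) (mu : X -> Y -> R) (v : R) : Prop :=
  exists eta p, rprt_feasible eps mu eta p /\ v = eta^-1.

Definition is_rprt_mu (eps : R) (mu : X -> Y -> R) (v : R) : Prop :=
  is_min (rprt_mu_objectives eps mu) v.

Definition is_rprt (eps : R) (v : R) : Prop :=
  is_max (fun w => exists mu, is_distribution mu /\ is_rprt_mu eps mu w) v.

Definition prt_feasible (eps : R) (w : rect -> Z -> R) : Prop :=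
  [/\ forall r z, 0 <= w r z,
      forall x y, (x, y) \in S ->
        \sum_(r : rect | in_rect r x y) w r (f x y) >= 1 - eps
    & forall x y, \sum_(z : Z) \sum_(r : rect | in_rect r x y) w r z = 1].

Definition is_prt (eps : R) (v : R) : Prop :=
  is_min (fun t => exists w, prt_feasible eps w /\ t = \sum_(r : rect) \sum_(z : Z) w r z) v.

Definition srec_feasible (z0 : Z) (eps : R) (w : rect -> R) : Prop :=
  [/\ forall r, 0 <= w r,
      forall x y, (x, y) \in S -> f x y = z0 ->
        1 - eps <= \sum_(r : rect | in_rect r x y) w r <= 1
    & forall x y, (x, y) \in S -> f x y <> z0 ->
        \sum_(r : rect | in_rect r x y) w r <= eps].

Definition is_srec (z0 : Z) (eps : R) (v : R) : Prop :=
  is_min (fun t => exists w, srec_feasible z0 eps w /\ t = \sum_(r : rect) w r) v.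

End Bounds.

(* Main.v *)
Require Import Defs.
From HB Require Import structures.
From mathcomp Require Import all_boot all_order all_algebra.
From mathcomp Require Import lra ring.
From Stdlib Require Import FunctionalExtensionality.
Import Order.TTheory GRing.Theory Num.Theory.
Local Open Scope ring_scope.
Set Implicit Arguments. Unset Strict Implicit. Unset Printing Implicit Defensive.
Section FM.
Variable R : realFieldType.

Lemma sum_ind (I : finType) (i : I) (F : I -> R) :
  \sum_l (l == i)%:R * F l = F i.
Proof.
rewrite (bigD1 i) //= eqxx mul1r big1 ?addr0 // => m /negbTE ->.
by rewrite mul0r.
Qed.

Lemma choose_t (I : finType) (P N : pred I) (G : I -> R) :
  (forall i k, P i -> N k -> G k <= G i) ->
  exists t, (forall k, N k -> G k <= t) /\ (forall i, P i -> t <= G i).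
Proof.
move=> H.
case: (pickP N) => [k0 Nk0|N0].
  case: (arg_maxP G Nk0) => k Nk Hk.
  exists (G k); split; first by move=> k' /Hk.
  by move=> i Pi; apply: H.
case: (pickP P) => [i0 Pi0|P0].
  case: (arg_minP G Pi0) => i Pi Hi.
  exists (G i); split; first by move=> k; rewrite N0.
  by move=> i' /Hi.
by exists 0; split=> [k|i]; rewrite ?N0 ?P0.
Qed.

Definition ext n (x' : 'I_n -> R) (t : R) (j : 'I_n.+1) : R :=
  oapp x' t (insub (val j)).

Lemma sum_ext n (F : 'I_n.+1 -> R) x' t :
  \sum_j F j * ext x' t j =
  \sum_(j < n) F (widen_ord (leqnSn n) j) * x' j + F ord_max * t.
Proof.
rewrite big_ord_recr /=; congr (_ + _ * _).
  by apply: eq_bigr => j _; rewrite /ext /= valK.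
by rewrite /ext insubN //= ltnn.
Qed.

Lemma fm_step n (I : finType) (a : I -> 'I_n.+1 -> R) :
 exists (I' : finType) (c : I' -> I -> R),
  [/\ (forall i' l, 0 <= c i' l), (forall i', \sum_l c i' l * a l ord_max = 0) &
  forall b (x' : 'I_n -> R),
    (forall i', \sum_j (\sum_l c i' l * a l (widen_ord (leqnSn n) j)) * x' j
                 <= \sum_l c i' l * b l) ->
    exists t, forall l, \sum_j a l j * ext x' t j <= b l].
Proof.
pose A l := a l ord_max.
exists (I + I * I)%type.
exists (fun i' => match i' with
  | inl i => if A i == 0 then fun l => (l == i)%:R else fun _ => 0
  | inr (i, k) => if (0 < A i) && (A k < 0)
       then fun l => (l == i)%:R * (- A k) + (l == k)%:R * A i else fun _ => 0 end).
split.
- case=> [i|[i k]] l; first by case: ifP.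
  case: ifP => // /andP[Pi Nk].
  apply: addr_ge0; apply: mulr_ge0 => //; rewrite ?oppr_ge0 ltW //.
- case=> [i|[i k]].
    case: ifP => [/eqP Ai|_]; last by rewrite big1 // => l _; rewrite mul0r.
    by rewrite sum_ind.
  case: ifP => _; last by rewrite big1 // => l _; rewrite mul0r.
  under eq_bigr do rewrite mulrDl -!mulrA.
  rewrite big_split /= !sum_ind /A; lra.
move=> b x' H.
pose s l := \sum_(j < n) a l (widen_ord (leqnSn n) j) * x' j.
have H' : forall i', \sum_l (match i' with
  | inl i => if A i == 0 then fun l => (l == i)%:R else fun _ => 0
  | inr (i, k) => if (0 < A i) && (A k < 0)
       then fun l => (l == i)%:R * (- A k) + (l == k)%:R * A i else fun _ => 0 end) l * s l <=
    \sum_l (match i' with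
  | inl i => if A i == 0 then fun l => (l == i)%:R else fun _ => 0
  | inr (i, k) => if (0 < A i) && (A k < 0)
       then fun l => (l == i)%:R * (- A k) + (l == k)%:R * A i else fun _ => 0 end) l * b l.
  move=> i'; apply: le_trans (H i'); rewrite le_eqVlt; apply/orP; left.
  apply/eqP; rewrite /s.
  under eq_bigr do rewrite mulr_sumr.
  rewrite exchange_big /=; apply: eq_bigr => j _.
  by rewrite mulr_suml; apply: eq_bigr => l _; rewrite mulrA.
pose G l := (b l - s l) / A l.
have Hc : forall i k, 0 < A i -> A k < 0 -> G k <= G i.
move=> i k Pi Nk.
have := H' (inr (i, k)); rewrite /= Pi Nk /=.
under eq_bigr do rewrite mulrDl -!mulrA.
rewrite big_split /= !sum_ind.
under [X in _ <= X]eq_bigr do rewrite mulrDl -!mulrA.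
rewrite big_split /= !sum_ind /G => hh.
have hE : (b i - s i) / A i * A i = b i - s i by rewrite divfK // gt_eqF.
have hF : (b k - s k) / A k * A k = b k - s k by rewrite divfK // lt_eqF.
move: hE hF; set E := (b i - s i) / A i; set F := (b k - s k) / A k => hE hF.
have hp : 0 < A i * (- A k) by rewrite mulr_gt0 // oppr_gt0.
nra.
have [t [Ht1 Ht2]] := @choose_t _ (fun i => 0 < A i) (fun k => A k < 0) G Hc.
exists t => l; rewrite sum_ext -/(s l) -/(A l).
  case: (ltgtP (A l) 0) => Al.
  - have := Ht1 l Al; rewrite /G.
    have hE : (b l - s l) / A l * A l = b l - s l by rewrite divfK // lt_eqF.
    move: hE; set E := (b l - s l) / A l => hE hle; nra.
  - have := Ht2 l Al; rewrite /G.
    have hE : (b l - s l) / A l * A l = b l - s l by rewrite divfK // gt_eqF.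
    move: hE; set E := (b l - s l) / A l => hE hle; nra.
  - have := H' (inl l); rewrite /= Al eqxx !sum_ind; lra.
Qed.


Lemma fm_alt n (I : finType) (a : I -> 'I_n -> R) :
  exists (J : finType) (C : J -> I -> R),
  [/\ (forall j l, 0 <= C j l), (forall j k, \sum_l C j l * a l k = 0) &
   forall b, (forall j, 0 <= \sum_l C j l * b l) ->
     exists x, forall l, \sum_k a l k * x k <= b l].
Proof.
elim: n I a => [|n IH] I a.
  exists I, (fun j l => (l == j)%:R); split.
  - by move=> j l; case: (l == j).
  - by move=> j [].
  move=> b Hb; exists (fun _ => 0) => l; rewrite big_ord0.
  by have := Hb l; rewrite sum_ind.
have [I' [c [c0 cz ct]]] := fm_step a.
pose a' i' j := \sum_l c i' l * a l (widen_ord (leqnSn n) j).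
have [J [C' [C0 Cz Ct]]] := IH I' a'.
exists J, (fun j l => \sum_i' C' j i' * c i' l); split.
- by move=> j l; apply: sumr_ge0 => i' _; apply: mulr_ge0.
- move=> j k.
  have -> : \sum_l (\sum_i' C' j i' * c i' l) * a l k =
            \sum_i' C' j i' * \sum_l c i' l * a l k.
    under eq_bigr do rewrite mulr_suml.
    rewrite exchange_big /=; apply: eq_bigr => i' _.
    by rewrite mulr_sumr; apply: eq_bigr => l _; rewrite mulrA.
  case: (unliftP ord_max k) => [k'|] ->.
    have -> : lift ord_max k' = widen_ord (leqnSn n) k'.
      by apply: val_inj; rewrite /= /bump leqNgt ltn_ord.
    exact: Cz.
  by rewrite big1 // => i' _; rewrite cz mulr0.
move=> b Hb.
have Hb' : forall j, 0 <= \sum_i' C' j i' * (\sum_l c i' l * b l).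
  move=> j; apply: le_trans (Hb j) _; rewrite le_eqVlt; apply/orP; left.
  apply/eqP; under eq_bigr do rewrite mulr_suml.
  rewrite exchange_big /=; apply: eq_bigr => i' _.
  by rewrite mulr_sumr; apply: eq_bigr => l _; rewrite mulrA.
have [x' Hx'] := Ct (fun i' => \sum_l c i' l * b l) Hb'.
have [t Ht] := ct b x' Hx'.
by exists (ext x' t).
Qed.

Lemma alt_gen (V I : finType) (a : I -> V -> R) :
  exists (J : finType) (C : J -> I -> R),
  [/\ (forall j l, 0 <= C j l), (forall j v, \sum_l C j l * a l v = 0) &
   forall b, (forall j, 0 <= \sum_l C j l * b l) ->
     exists x : V -> R, forall l, \sum_v a l v * x v <= b l].
Proof.
have [J [C [C0 Cz Ct]]] := fm_alt (fun l (k : 'I_#|V|) => a l (enum_val k)).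
exists J, C; split => //.
  by move=> j v; rewrite -(enum_rankK v); apply: Cz.
move=> b /Ct [x' Hx']; exists (fun v => x' (enum_rank v)) => l.
rewrite (reindex (fun k : 'I_#|V| => enum_val k)) /=; last by exists enum_rank => v _; [apply: enum_valK|apply: enum_rankK].
by under eq_bigr do rewrite enum_valK; apply: Hx'.
Qed.



Definition islin (V : finType) (L : (V -> R) -> R) :=
  (forall x y, L (fun v => x v + y v) = L x + L y) /\
  (forall c x, L (fun v => c * x v) = c * L x).

Lemma islin_rep (V : finType) (L : (V -> R) -> R) : islin L ->
  forall x, L x = \sum_v L (fun w => (w == v)%:R) * x v.
Proof.
move=> [Ladd Lhom] x.
have L0 : L (fun _ => 0) = 0.
  have -> : (fun _ : V => 0 : R) = (fun v => 0 * x v).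
    by apply: functional_extensionality => v; rewrite mul0r.
  by rewrite Lhom mul0r.
have Hs : forall s : seq V, L (fun w => \sum_(v <- s) x v * (w == v)%:R) =
   \sum_(v <- s) L (fun w => (w == v)%:R) * x v.
  elim=> [|v s IHs].
    rewrite big_nil -L0; congr L; apply: functional_extensionality => w.
    by rewrite big_nil.
  have -> : (fun w => \sum_(v0 <- v :: s) x v0 * (w == v0)%:R) =
     (fun w => (fun w => x v * (w == v)%:R) w +
               (fun w => \sum_(v0 <- s) x v0 * (w == v0)%:R) w).
    by apply: functional_extensionality => w; rewrite big_cons.
  by rewrite Ladd IHs Lhom big_cons mulrC.
rewrite -Hs; congr L; apply: functional_extensionality => w.
rewrite (bigD1 w) //= eqxx mulr1 big1 ?addr0 // => v /negbTE.
by rewrite eq_sym => ->; rewrite mulr0.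
Qed.

Lemma alt_lin (V I : finType) (L : I -> (V -> R) -> R) :
  (forall i, islin (L i)) ->
  exists (J : finType) (C : J -> I -> R),
  [/\ (forall j l, 0 <= C j l), (forall j x, \sum_l C j l * L l x = 0) &
   forall b, (forall j, 0 <= \sum_l C j l * b l) ->
     exists x : V -> R, forall l, L l x <= b l].
Proof.
move=> Hlin.
have [J [C [C0 Cz Ct]]] := alt_gen (fun l v => L l (fun w => (w == v)%:R)).
exists J, C; split => //.
  move=> j x.
  under eq_bigr do rewrite (islin_rep (Hlin _)) mulr_sumr.
  rewrite exchange_big /= big1 // => v _.
  rewrite (eq_bigr (fun l => C j l * L l (fun w => (w == v)%:R) * x v)); last by move=> l _; rewrite mulrA.
  by rewrite -mulr_suml Cz mul0r.
move=> b /Ct [x Hx]; exists x => l.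
by rewrite (islin_rep (Hlin l)).
Qed.

Lemma lin_max (V I : finType) (L : I -> (V -> R) -> R) (b g : I -> R) :
  (forall i, islin (L i)) ->
  (exists s x, forall l, L l x <= b l + s * g l) ->
  (exists B, forall s x, (forall l, L l x <= b l + s * g l) -> s <= B) ->
  exists s x, (forall l, L l x <= b l + s * g l) /\
    (forall s' x', (forall l, L l x' <= b l + s' * g l) -> s' <= s).
Proof.
move=> Hlin [s0 [x0 Hx0]] [B HB].
have [J [C [C0 Cz Ct]]] := alt_lin Hlin.
pose al j := \sum_l C j l * b l.
pose be j := \sum_l C j l * g l.
have eqab : forall s j, al j + s * be j = \sum_l C j l * (b l + s * g l).
  move=> s j; rewrite /al /be mulr_sumr -big_split /=; apply: eq_bigr => l _.
  by rewrite mulrCA -mulrDr.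
have feasN : forall s x, (forall l, L l x <= b l + s * g l) ->
    forall j, 0 <= al j + s * be j.
  move=> s x Hx j.
  rewrite eqab; apply: (@le_trans _ _ (\sum_l C j l * L l x)); first by rewrite Cz.
  apply: ler_sum => l _.
  by apply: ler_wpM2l => //; apply: Hx.
have feasS : forall s, (forall j, 0 <= al j + s * be j) ->
    exists x, forall l, L l x <= b l + s * g l.
  by move=> s Hs; apply: Ct => j; rewrite -eqab.
have H0 := feasN _ _ Hx0.
have [j0 Pj0] : exists j, be j < 0.
  case: (pickP (fun j => be j < 0)) => [j Hj|Hn]; first by exists j.
  have HB1 : forall j, 0 <= al j + (B + 1) * be j.
    move=> j; have := Hn j; rewrite /= ltNge => /negbFE hb.
    have := H0 j; have := HB s0 x0 Hx0; nra.
  have [x1 Hx1] := feasS _ HB1.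
  have := HB _ _ Hx1; lra.
pose q j := al j / (- be j).
case: (@arg_minP _ _ _ j0 (fun j => be j < 0) q Pj0) => js Pjs Hjs.
have qE : forall j, be j < 0 -> q j * (- be j) = al j.
  by move=> j hj; rewrite /q divfK // oppr_eq0 lt_eqF.
have Hsf : forall j, 0 <= al j + q js * be j.
  move=> j; case: (ltP (be j) 0) => hj.
    have := Hjs j hj; have := qE j hj; nra.
  have := H0 js; have := qE js Pjs; have := H0 j; nra.
have [xs Hxs] := feasS _ Hsf.
exists (q js), xs; split => // s' x' Hx'.
have := feasN _ _ Hx' js; have := qE js Pjs; nra.
Qed.



Section Lin.
Variable V : finType.
Implicit Types L : (V -> R) -> R.

Lemma islin_eval v : islin (fun u : V -> R => u v).
Proof. by split. Qed.

Lemma islin_add L1 L2 : islin L1 -> islin L2 -> islin (fun u => L1 u + L2 u).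
Proof.
move=> [a1 h1] [a2 h2]; split.
  by move=> x y; rewrite a1 a2 addrACA.
by move=> c x; rewrite h1 h2 mulrDr.
Qed.

Lemma islin_scale k L : islin L -> islin (fun u => k * L u).
Proof.
move=> [a1 h1]; split; first by move=> x y; rewrite a1 mulrDr.
by move=> c x; rewrite h1 mulrCA.
Qed.

Lemma islin_opp L : islin L -> islin (fun u => - L u).
Proof.
move=> [a1 h1]; split; first by move=> x y; rewrite a1 opprD.
by move=> c x; rewrite h1 mulrN.
Qed.

Lemma islin_sum (T : Type) (s : seq T) (P : pred T) (F : T -> (V -> R) -> R) :
  (forall t, islin (F t)) -> islin (fun u => \sum_(t <- s | P t) F t u).
Proof.
move=> H; split.
  move=> x y; rewrite -big_split /=; apply: eq_bigr => t _.
  by case: (H t) => a _; rewrite a.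
move=> c x; rewrite mulr_sumr; apply: eq_bigr => t _.
by case: (H t) => _ h; rewrite h.
Qed.

Lemma islin_zero : islin (fun _ : V -> R => 0).
Proof. by split => *; rewrite ?addr0 ?mulr0. Qed.

End Lin.

End FM.
Section Main.
Variables (R : realFieldType) (X Y Z : finType) (S : {set X * Y}) (f : X -> Y -> Z).

Lemma single_le_sum (T : finType) (F : T -> R) t :
  (forall i, 0 <= F i) -> F t <= \sum_i F i.
Proof. by move=> H; rewrite (bigD1 t) //= lerDl sumr_ge0. Qed.

Lemma filt_le_sum (T : finType) (P : pred T) (F : T -> R) :
  (forall i, 0 <= F i) -> \sum_(i | P i) F i <= \sum_i F i.
Proof.
by move=> H; rewrite [X in _ <= X](bigID P) /= lerDl sumr_ge0.
Qed.

Lemma sum_splitS (F : X * Y -> R) :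
  \sum_(xy in S) F xy + \sum_(xy in ~: S) F xy = \sum_xy F xy.
Proof.
rewrite [RHS](bigID (fun xy => xy \in S)) /=; congr (_ + _).
by apply: eq_bigl => xy; rewrite in_setC.
Qed.

Lemma dist_nonempty (mu : X -> Y -> R) : is_distribution mu ->
  exists (x : X) (y : Y), true.
Proof.
move=> [_ H].
case: (pickP (@predT X)) => [x _|H0].
  case: (pickP (@predT Y)) => [y _|H1]; first by exists x, y.
  have : \sum_x \sum_y mu x y = 0 by apply: big1 => x' _; apply: big_pred0.
  by rewrite H => e; have := @ltr01 R; rewrite e ltxx.
have : \sum_x \sum_y mu x y = 0 by apply: big_pred0.
by rewrite H => e; have := @ltr01 R; rewrite e ltxx.
Qed.

Lemma prt_to_rprt (eps : R) (w : rect X Y -> Z -> R) (mu : X -> Y -> R) :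
  0 <= eps -> prt_feasible S f eps w -> is_distribution mu ->
  0 < \sum_r \sum_z w r z /\
  rprt_feasible S f eps mu (\sum_r \sum_z w r z)^-1
     (fun r z => w r z / \sum_r \sum_z w r z).
Proof.
move=> heps [w0 wS w1] Hmu.
have [x0 [y0 _]] := dist_nonempty Hmu.
set v := \sum_r \sum_z w r z.
have vpos : 0 < v.
  have : 1 <= v.
    rewrite -(w1 x0 y0) /v [X in _ <= X]exchange_big /=; apply: ler_sum => z _.
    by apply: filt_le_sum => r; apply: w0.
  by apply: lt_le_trans; apply: ltr01.
have iv0 : 0 < v^-1 by rewrite invr_gt0.
have Hload : forall x y, \sum_z \sum_(r | in_rect r x y) w r z / v = v^-1.
  move=> x y; under eq_bigr do rewrite -mulr_suml.
  by rewrite -mulr_suml w1 mul1r.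
split => //; split => //.
- by move=> r z; rewrite divr_ge0 // ltW.
- have : \sum_(xy in S) mu xy.1 xy.2 * ((1 - eps) * v^-1) +
         \sum_(xy in ~: S) mu xy.1 xy.2 * ((1 - eps) * v^-1) = (1 - eps) * v^-1.
    rewrite sum_splitS -mulr_suml -pair_bigA /=.
    by case: Hmu => _ ->; rewrite mul1r.
  move=> <-; apply: lerD; apply: ler_sum => xy Hxy;
    apply: ler_wpM2l; try by case: Hmu.
    rewrite -mulr_suml; apply: ler_wpM2r; first by rewrite ltW.
    by apply: wS; rewrite -surjective_pairing.
  by rewrite Hload; rewrite -[X in _ <= X]mul1r; apply: ler_wpM2r;
     [rewrite ltW | lra].
- by move=> x y; rewrite Hload.
- under eq_bigr do rewrite -mulr_suml.
  by rewrite -mulr_suml mulfV // gt_eqF.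
Qed.



Ltac lin := repeat match goal with |- islin _ => first
  [ apply: islin_sum; move=> ? /=
  | apply: islin_add | apply: islin_opp | apply: islin_scale
  | apply: islin_eval | apply: islin_zero ] end.

Section Attain.
Variables (eps : R) (mu : X -> Y -> R).

Definition Vr := option (rect X Y * Z).
Definition Ir := ((rect X Y * Z) + ((X * Y) + 'I_4))%type.

Definition LHSu (u : Vr -> R) :=
  \sum_(xy in S) mu xy.1 xy.2 * (\sum_(r | in_rect r xy.1 xy.2) u (Some (r, f xy.1 xy.2)))
  + \sum_(xy in ~: S) mu xy.1 xy.2 * (\sum_z \sum_(r | in_rect r xy.1 xy.2) u (Some (r, z))).

Definition Lr (i : Ir) (u : Vr -> R) : R :=
  match i with
  | inl v => - u (Some v)
  | inr (inl xy) => \sum_z \sum_(r | in_rect r xy.1 xy.2) u (Some (r, z)) - u None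
  | inr (inr k) => match val k with
    | 0 => (1 - eps) * u None - LHSu u
    | 1 => \sum_r \sum_z u (Some (r, z))
    | 2 => - \sum_r \sum_z u (Some (r, z))
    | _ => - u None end
  end.

Definition br (i : Ir) : R :=
  match i with
  | inr (inr k) => match val k with 1 => 1 | 2 => -1 | _ => 0 end
  | _ => 0 end.

Definition gr (i : Ir) : R :=
  match i with
  | inr (inr k) => match val k with 0 | 1 | 2 => 0 | _ => -1 end
  | _ => 0 end.

Definition mku (eta : R) (p : rect X Y -> Z -> R) : Vr -> R :=
  fun o => if o is Some v then p v.1 v.2 else eta.

Lemma Lr_lin i : islin (Lr i).
Proof.
case: i => [v|[xy|[[|[|[|k]]] hk]]]; rewrite /Lr /= ?/LHSu; lin.
Qed.

Lemma rows_of_feas eta p s : rprt_feasible S f eps mu eta p -> s <= eta ->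
  forall l, Lr l (mku eta p) <= br l + s * gr l.
Proof.
case=> e0 p0 Hi Hii Hiii Hs.
case=> [v|[xy|[[|[|[|k]]] hk]]]; rewrite /Lr /br /gr /= ?/LHSu /=.
- by rewrite mulr0 addr0 oppr_le0.
- by rewrite mulr0 addr0 subr_le0.
- rewrite mulr0 addr0 subr_le0; exact: Hi.
- by rewrite mulr0 addr0 Hiii.
- by rewrite mulr0 addr0 Hiii.
- lra.
Qed.

Lemma feas_of_rows u s : 0 < s -> (forall l, Lr l u <= br l + s * gr l) ->
  rprt_feasible S f eps mu (u None) (fun r z => u (Some (r, z))) /\ s <= u None.
Proof.
move=> s0 H.
have H0 := H (inr (inr (@Ordinal 4 0 isT))).
have H1 := H (inr (inr (@Ordinal 4 1 isT))).
have H2 := H (inr (inr (@Ordinal 4 2 isT))).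
have H3 := H (inr (inr (@Ordinal 4 3 isT))).
rewrite /Lr /br /gr /= in H0 H1 H2 H3.
split; last by lra.
split.
- lra.
- by move=> r z; have := H (inl (r, z)); rewrite /Lr /br /gr /=; lra.
- move: H0; rewrite /LHSu; lra.
- by move=> x y; have := H (inr (inl (x, y))); rewrite /Lr /br /gr /=; lra.
- lra.
Qed.

Lemma rows_bound u s : is_distribution mu -> eps < 1 ->
  (forall l, Lr l u <= br l + s * gr l) -> s <= (1 - eps)^-1.
Proof.
move=> [mu0 mu1] he H.
have H0 := H (inr (inr (@Ordinal 4 0 isT))).
have H1 := H (inr (inr (@Ordinal 4 1 isT))).
have H3 := H (inr (inr (@Ordinal 4 3 isT))).
rewrite /Lr /br /gr /= in H0 H1 H3.
have up0 : forall r z, 0 <= u (Some (r, z)).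
  by move=> r z; have := H (inl (r, z)); rewrite /Lr /br /gr /=; lra.
set T := \sum_r \sum_z u (Some (r, z)) in H1.
have HL : LHSu u <= T.
  have <- : \sum_(xy in S) mu xy.1 xy.2 * T + \sum_(xy in ~: S) mu xy.1 xy.2 * T = T.
    by rewrite sum_splitS -mulr_suml -pair_bigA /= mu1 mul1r.
  rewrite /LHSu; apply: lerD; apply: ler_sum => xy _; apply: ler_wpM2l => //.
    apply: le_trans (filt_le_sum _ _) _ => [r|]; first exact: up0.
    by apply: ler_sum => r _; apply: single_le_sum => z; apply: up0.
  rewrite /T [X in _ <= X]exchange_big /=; apply: ler_sum => z _.
  by apply: filt_le_sum => r.
have hpos : 0 < 1 - eps by lra.
have : (1 - eps)^-1 * (1 - eps) = 1 by rewrite mulVf // gt_eqF.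
set B := (1 - eps)^-1 => hB.
nra.
Qed.

Lemma rprt_attain eta0 p0 : eps < 1 -> is_distribution mu ->
  rprt_feasible S f eps mu eta0 p0 ->
  exists eta p, rprt_feasible S f eps mu eta p /\ is_rprt_mu S f eps mu eta^-1.
Proof.
move=> he Hmu F0.
have e0 : 0 < eta0 by case: F0.
have HF : exists s x, forall l, Lr l x <= br l + s * gr l.
  by exists eta0, (mku eta0 p0); apply: rows_of_feas F0 (lexx _).
have HB : exists B, forall s x, (forall l, Lr l x <= br l + s * gr l) -> s <= B.
  by exists ((1 - eps)^-1) => s x Hx; apply: rows_bound Hmu he Hx.
have [s [u [Hu Hmax]]] := @lin_max R Vr Ir Lr br gr Lr_lin HF HB.
have s0 : eta0 <= s := Hmax _ _ (rows_of_feas F0 (lexx _)).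
have spos : 0 < s by apply: lt_le_trans s0.
have [Fu su] := feas_of_rows spos Hu.
exists (u None), (fun r z => u (Some (r, z))); split => //.
split; first by exists (u None), (fun r z => u (Some (r, z))).
move=> w [eta' [p' [F' ->]]].
have e' : 0 < eta' by case: F'.
have := Hmax _ _ (rows_of_feas F' (lexx _)) => hs.
rewrite lef_pV2 ?posrE //; first by apply: le_trans su.
by apply: lt_le_trans su.
Qed.

End Attain.



Definition Vq := (rect X Y * Z)%type.
Definition Iq := ((Vq + (X * Y)) + ((X * Y) + 'I_1))%type.

Definition Lq (i : Iq) (u : Vq -> R) : R :=
  match i with
  | inl (inl v) => - u v
  | inl (inr xy) => \sum_z \sum_(r | in_rect r xy.1 xy.2) u (r, z)
  | inr (inl xy) => - ((xy \in S)%:R * \sum_(r | in_rect r xy.1 xy.2) u (r, f xy.1 xy.2))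
  | inr (inr _) => \sum_v u v
  end.

Definition bq (eps V0 : R) (i : Iq) : R :=
  match i with
  | inl (inl _) => 0
  | inl (inr _) => 1
  | inr (inl xy) => - ((xy \in S)%:R * (1 - eps))
  | inr (inr _) => V0
  end.

Lemma Lq_lin i : islin (Lq i).
Proof. by case: i => [[v|xy]|[xy|k]]; rewrite /Lq; lin. Qed.

Lemma q_exists eps V0 : 0 <= eps -> 0 < V0 ->
  (forall mu, is_distribution mu ->
     exists eta p, rprt_feasible S f eps mu eta p /\ eta^-1 <= V0) ->
  exists u, forall l, Lq l u <= bq eps V0 l.
Proof.
move=> heps V0pos H.
have [J [C [C0 Cz Ct]]] := alt_lin Lq_lin.
apply: Ct => j; rewrite leNgt; apply/negP => Hneg.
pose D := \sum_xy C j (inr (inl xy)) * (xy \in S)%:R.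
have Eb : \sum_l C j l * bq eps V0 l =
   \sum_xy C j (inl (inr xy)) - (1 - eps) * D + C j (inr (inr ord0)) * V0.
  rewrite !big_sumType big_ord1 /= big1 ?add0r; last by move=> v _; rewrite mulr0.
  under eq_bigr do rewrite mulr1.
  have -> : \sum_xy C j (inr (inl xy)) * - ((xy \in S)%:R * (1 - eps)) =
            - ((1 - eps) * D).
    rewrite /D mulr_sumr -sumrN; apply: eq_bigr => xy _.
    by rewrite mulrN; congr (- _); ring.
  by rewrite addrA.
have D0 : 0 <= D by apply: sumr_ge0 => xy _; apply: mulr_ge0.
have G0 : 0 <= \sum_xy C j (inl (inr xy)) by apply: sumr_ge0.
have B0 : 0 <= C j (inr (inr ord0)) by [].
have Dpos : 0 < D.
  rewrite lt_neqAle D0 andbT; apply/negP => /eqP D0'.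
  move: Hneg; rewrite Eb -D0' mulr0 subr0.
  have : 0 <= C j (inr (inr ord0)) * V0 by apply: mulr_ge0 => //; apply: ltW.
  lra.
pose mu := fun x y => C j (inr (inl (x, y))) * ((x, y) \in S)%:R / D.
have Dmu : is_distribution mu.
  split.
    by move=> x y; rewrite /mu divr_ge0 ?mulr_ge0 // ltW.
  rewrite pair_bigA /= /mu.
  under eq_bigr do rewrite -surjective_pairing.
  by rewrite -mulr_suml mulfV // gt_eqF.
have [eta [p [[epos p0 Hi Hii Hiii] Hle]]] := H mu Dmu.
pose K := \sum_xy C j (inr (inl xy)) *
   ((xy \in S)%:R * \sum_(r | in_rect r xy.1 xy.2) p r (f xy.1 xy.2)).
have Hout : \sum_(xy in ~: S) mu xy.1 xy.2 *
    (\sum_z \sum_(r | in_rect r xy.1 xy.2) p r z) = 0.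
  apply: big1 => xy; rewrite in_setC => /negbTE hS.
  by rewrite /mu -surjective_pairing hS /= mulr0 !mul0r.
have Hin : \sum_(xy in S) mu xy.1 xy.2 *
    (\sum_(r | in_rect r xy.1 xy.2) p r (f xy.1 xy.2)) = K / D.
  rewrite big_mkcond /= /K mulr_suml; apply: eq_bigr => xy _.
  rewrite /mu -surjective_pairing; case: ifP => hS.
    by rewrite hS mulr1 mul1r mulrAC.
  by rewrite mul0r mulr0 mul0r.
rewrite Hout addr0 Hin in Hi.
have KD : K / D * D = K by rewrite divfK // gt_eqF.
have Zp := Cz j (fun v => p v.1 v.2).
rewrite !big_sumType big_ord1 /= in Zp.
have T1 : \sum_v C j (inl (inl v)) * - p v.1 v.2 <= 0.
  rewrite -oppr_ge0 -sumrN; apply: sumr_ge0 => v _.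
  by rewrite mulrN opprK mulr_ge0.
have T2 : \sum_xy C j (inl (inr xy)) *
     (\sum_z \sum_(r | in_rect r xy.1 xy.2) p r z) <=
   eta * \sum_xy C j (inl (inr xy)).
  rewrite mulr_sumr; apply: ler_sum => xy _; rewrite mulrC.
  by apply: ler_wpM2r => //; apply: Hii.
have T3 : \sum_xy C j (inr (inl xy)) *
   - ((xy \in S)%:R * \sum_(r | in_rect r xy.1 xy.2) p r (f xy.1 xy.2)) = - K.
  by rewrite /K -sumrN; apply: eq_bigr => xy _; rewrite mulrN.
have T4 : \sum_(v : Vq) p v.1 v.2 = 1.
  by rewrite -Hiii (pair_bigA _ (fun r z => p r z)).
rewrite T3 T4 mulr1 in Zp.
have hV : 1 <= V0 * eta.
  have : eta^-1 * eta = 1 by rewrite mulVf // gt_eqF.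
  move: Hle; set ie := eta^-1 => Hle hie; nra.
move: Hneg; rewrite Eb => Hneg.
have P1 : eta * (\sum_xy C j (inl (inr xy)) - (1 - eps) * D +
      C j (inr (inr ord0)) * V0) < 0 by rewrite pmulr_rlt0.
have P2 : C j (inr (inr ord0)) * 1 <= C j (inr (inr ord0)) * (V0 * eta).
  by apply: ler_wpM2l.
have P3 : (1 - eps) * eta * D <= K by nra.
nra.
Qed.

End Main.
Unset Implicit Arguments.
Theorem lemma3p2 (R : realFieldType) (X Y Z : finType) (S : {set X * Y})
  (f : X -> Y -> Z) (eps : R) (z0 : Z) (heps : 0 <= eps)
  (vsrec vrprt vprt : R) :
  is_srec S f z0 eps vsrec -> is_rprt S f eps vrprt -> is_prt S f eps vprt ->
  vsrec <= vrprt /\ vrprt <= vprt.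
Proof.
move=> [_ Hsmin] [[mu1 [Dmu1 [[eta1 [p1 [F1 E1]]] M1]]] Mx] [[w [Fw Ew]] _].
have e1 : 0 < eta1 by case: F1.
have Vpos : 0 < vrprt by rewrite E1 invr_gt0.
have Hall : forall mu, is_distribution mu ->
    exists eta p, rprt_feasible S f eps mu eta p /\ eta^-1 <= vrprt.
  move=> mu Dmu.
  have he : eps < 1.
    rewrite ltNge; apply/negP => he.
    case: F1 => _ p0 Hi Hii Hiii.
    have F2 : rprt_feasible S f eps mu1 (2 * eta1) p1.
      split => //.
      - by rewrite mulr_gt0.
      - nra.
      - by move=> x y; apply: le_trans (Hii x y) _; lra.
    have := M1 _ (ex_intro _ (2 * eta1) (ex_intro _ p1 (conj F2 erefl))).
    rewrite E1 invfM.
    have : 0 < eta1^-1 by rewrite invr_gt0.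
    set a := eta1^-1 => ha; lra.
  have [vpos Fp] := prt_to_rprt heps Fw Dmu.
  have [eta [p [Fe He]]] := rprt_attain he Dmu Fp.
  exists eta, p; split => //.
  by apply: Mx; exists mu.
split; last first.
  have [vpos Fp] := prt_to_rprt heps Fw Dmu1.
  rewrite Ew; apply: M1.
  exists (\sum_r \sum_z w r z)^-1, (fun r z => w r z / \sum_r \sum_z w r z).
  by rewrite invrK.
have [u Hu] := q_exists heps Vpos Hall.
have u0 : forall v, 0 <= u v.
  by move=> v; have := Hu (inl (inl v)); rewrite /Lq /bq /=; lra.
have uload : forall x y, \sum_z \sum_(r | in_rect r x y) u (r, z) <= 1.
  by move=> x y; have := Hu (inl (inr (x, y))).
have ucorr : forall x y, (x, y) \in S -> 1 - eps <= \sum_(r | in_rect r x y) u (r, f x y).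
  move=> x y hS; have := Hu (inr (inl (x, y))); rewrite /Lq /bq /= hS /= !mul1r.
  lra.
have utot : \sum_v u v <= vrprt by have := Hu (inr (inr ord0)).
have HG : forall x y z, 0 <= \sum_(r | in_rect r x y) u (r, z).
  by move=> x y z; apply: sumr_ge0 => r _.
apply: le_trans (Hsmin (\sum_r u (r, z0)) _) _.
  exists (fun r => u (r, z0)); split => //; split.
  - by move=> r.
  - move=> x y hS hf; rewrite -hf; apply/andP; split; first exact: ucorr.
    apply: le_trans (uload x y).
    by apply: (@single_le_sum _ _ (fun z => \sum_(r | in_rect r x y) u (r, z))).
  - move=> x y hS hf.
    have := uload x y; rewrite (bigD1 z0) //= (bigD1 (f x y)) /=; last first.
      by apply/eqP.
    have := ucorr x y hS.
    have : 0 <= \sum_(i | (i != z0) && (i != f x y)) \sum_(r | in_rect r x y) u (r, i).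
      by apply: sumr_ge0.
    lra.
apply: le_trans utot.
have -> : \sum_v u v = \sum_r \sum_z u (r, z).
  by rewrite pair_bigA; apply: eq_bigr => v _; rewrite -surjective_pairing.
apply: ler_sum => r _.
by apply: (@single_le_sum _ _ (fun z => u (r, z))).
Qed.
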